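(* Let $H\in\mathbb{C}^{n\times n}$ be Hermitian with eigenvalues $\lambda_1(H)\ge\lambda_2(H)\ge\cdots\ge\lambda_n(H)$ (counted with multiplicity), let $1\le k<n$, and suppose $\lambda_k(H)-\lambda_{k+1}(H)>0$. Let $P_*\in\mathbb{C}^{n\times k}$ with $P_*^{\mathrm{H}}P_*=I_k$ be such that its column space ${\cal R}(P_* )$ is the invariant subspace of $H$ associated with its $k$ largest eigenvalues $\lambda_1(H),\dots,\lambda_k(H)$. Given any $P\in\mathbb{C}^{n\times k}$ with $P^{\mathrm{H}}P=I_k$, let $$\eta=\operatorname{tr}(P_*^{\mathrm{H}}HP_* )-\operatorname{tr}(P^{\mathrm{H}}HP),\qquad \epsilon=\sqrt{\frac{\eta}{\lambda_k(H)-\lambda_{k+1}(H)}}.$$ Then $$\frac{\|HP-P(P^{\mathrm{H}}HP)\|_{\mathrm{F}}}{\lambda_1(H)-\lambda_n(H)}\le\|\sin\Theta({\cal R}(P),{\cal R}(P_* ))\|_{\mathrm{F}}\le\epsilon.$$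
   Context: For a matrix $X$, $X^{\mathrm{H}}$ is its conjugate transpose, ${\cal R}(X)$ its column space, $\|X\|_{\mathrm{F}}=\sqrt{\operatorname{tr}(X^{\mathrm{H}}X)}$ the Frobenius norm. For two $k$-dimensional subspaces ${\cal X}={\cal R}(X)$, ${\cal Y}={\cal R}(Y)$ of $\mathbb{C}^n$ with $X,Y\in\mathbb{C}^{n\times k}$ having orthonormal columns, the canonical angles are $\theta_i=\arccos\sigma_i(X^{\mathrm{H}}Y)\in[0,\pi/2]$, $i=1,\dots,k$, where $\sigma_1(X^{\mathrm{H}}Y)\ge\cdots\ge\sigma_k(X^{\mathrm{H}}Y)$ are the singular values; $\Theta({\cal X},{\cal Y})=\operatorname{diag}(\theta_1,\dots,\theta_k)$ and $\|\sin\Theta({\cal X},{\cal Y})\|_{\mathrm{F}}=\big(\sum_{i=1}^k\sin^2\theta_i\big)^{1/2}$. *)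

(* Defs.v *)
From HB Require Import structures.
From mathcomp Require Import all_boot all_order all_algebra.
From mathcomp Require Import complex sesquilinear spectral.
From mathcomp Require Import reals trigo.
Set Implicit Arguments. Unset Strict Implicit. Unset Printing Implicit Defensive.
Import Order.TTheory GRing.Theory Num.Theory.
Local Open Scope ring_scope.
Local Open Scope sesquilinear_scope.

Section Defs.
Variable R : realType.
Local Notation C := R[i].

Definition hermmx n (H : 'M[C]_n) : Prop := H ^t* = H.

(* [lam] is the list of eigenvalues of H, counted with multiplicity,
   in nonincreasing order: lam`_0 >= lam`_1 >= ... (so lambda_i(H) = lam`_(i-1)). *)
Definition sorted_eigenvalues n (H : 'M[C]_n) (lam : seq R) : Prop :=
  [/\ size lam = n, sorted (fun a b => b <= a) lam &
      char_poly H = \prod_(l <- lam) ('X - ((l%:C)%C)%:P)].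

Definition frobnorm m n (A : 'M[C]_(m, n)) : R :=
  Num.sqrt (complex.Re (\tr (A ^t* *m A))).

(* singular values of A : 'M_(m,k) : square roots of the eigenvalues of the
   Hermitian positive semidefinite matrix A^H A (order is irrelevant below) *)
Definition sing_vals m k (A : 'M[C]_(m, k)) (i : 'I_k) : R :=
  Num.sqrt (complex.Re (spectral_diag (A ^t* *m A) 0 i)).

Definition canon_angle n k (X Y : 'M[C]_(n, k)) (i : 'I_k) : R :=
  acos (sing_vals (X ^t* *m Y) i).

Definition sinThetaF n k (X Y : 'M[C]_(n, k)) : R :=
  Num.sqrt (\sum_(i < k) (sin (canon_angle X Y i)) ^+ 2).

End Defs.

(* Main.v *)
Require Import Defs.
From HB Require Import structures.
From mathcomp Require Import all_boot all_order all_algebra.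
From mathcomp Require Import complex sesquilinear spectral.
From mathcomp Require Import reals trigo.
From mathcomp Require Import ring lra.
Import Order.TTheory GRing.Theory Num.Theory.
Local Open Scope ring_scope.
Local Open Scope sesquilinear_scope.
Set Implicit Arguments. Unset Strict Implicit. Unset Printing Implicit Defensive.
Section S.
Variable R : realType.
Local Notation C := R[i].
Local Notation Re := (@complex.Re R).
Local Notation Im := (@complex.Im R).

Lemma ReD (x y : C) : Re (x + y) = Re x + Re y.
Proof. by case: x; case: y. Qed.
Lemma ReN (x : C) : Re (- x) = - Re x.
Proof. by case: x. Qed.
Lemma ReB (x y : C) : Re (x - y) = Re x - Re y.
Proof. by rewrite ReD ReN. Qed.
Lemma Re_sum (I : Type) (r : seq I) (P : pred I) (F : I -> C) :
  Re (\sum_(i <- r | P i) F i) = \sum_(i <- r | P i) Re (F i).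
Proof. by elim/big_rec2: _ => // i y1 y2 _ <-; rewrite ReD. Qed.
Lemma ReCJ (x : C) : Re (x^* * x) = Re x ^+ 2 + Im x ^+ 2.
Proof. case: x => a b /=. ring. Qed.
Lemma ReRM (a : R) (x : C) : Re ((a%:C)%C * x) = a * Re x.
Proof. case: x => c d /=. ring. Qed.
Lemma ReR (a : R) : Re ((a%:C)%C) = a.
Proof. by []. Qed.
Lemma adjM m n p (A : 'M[C]_(m,n)) (B : 'M[C]_(n,p)) :
  (A *m B)^t* = B^t* *m A^t*.
Proof. by rewrite trmx_mul map_mxM. Qed.
Lemma adjD m n (A B : 'M[C]_(m,n)) : (A + B)^t* = A^t* + B^t*.
Proof. by rewrite linearD /= map_mxD. Qed.
Lemma adjN m n (A : 'M[C]_(m,n)) : (- A)^t* = - A^t*.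
Proof. by rewrite linearN /= map_mxN. Qed.
Lemma adjB m n (A B : 'M[C]_(m,n)) : (A - B)^t* = A^t* - B^t*.
Proof. by rewrite adjD adjN. Qed.
Lemma adjK m n (A : 'M[C]_(m,n)) : A^t*^t* = A.
Proof. exact: trmxCK. Qed.
Lemma adj_scalar n (c : C) : (c%:M : 'M[C]_n)^t* = (c^*)%:M.
Proof. by rewrite tr_scalar_mx map_scalar_mx. Qed.
Lemma adj1 n : (1%:M : 'M[C]_n)^t* = 1%:M.
Proof. by rewrite adj_scalar conjC1. Qed.

Definition fn2 m n (X : 'M[C]_(m,n)) : R := Re (\tr (X ^t* *m X)).

Lemma fn2E m n (X : 'M[C]_(m,n)) :
  fn2 X = \sum_j \sum_i (Re (X i j) ^+ 2 + Im (X i j) ^+ 2).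
Proof.
rewrite /fn2 /mxtrace Re_sum; apply: eq_bigr => j _.
rewrite !mxE Re_sum; apply: eq_bigr => i _.
by rewrite !mxE ReCJ.
Qed.

Lemma fn2_ge0 m n (X : 'M[C]_(m,n)) : 0 <= fn2 X.
Proof.
rewrite fn2E; apply: sumr_ge0 => j _; apply: sumr_ge0 => i _.
by rewrite addr_ge0 // sqr_ge0.
Qed.

Lemma fn2_eq0 m n (X : 'M[C]_(m,n)) : fn2 X = 0 -> X = 0.
Proof.
rewrite fn2E => H; apply/matrixP => i j; rewrite mxE.
have H1 := psumr_eq0P (fun j _ => sumr_ge0 _ (fun i (_ : true) => addr_ge0 (sqr_ge0 (Re (X i j))) (sqr_ge0 (Im (X i j))))) H.
have /eqP := @psumr_eq0P _ _ _ _ (fun i _ => addr_ge0 (sqr_ge0 (Re (X i j))) (sqr_ge0 (Im (X i j)))) (H1 j isT) i isT.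
rewrite paddr_eq0 ?sqr_ge0 // !sqrf_eq0 => /andP[/eqP a /eqP b].
by case: (X i j) a b => /= x y -> ->.
Qed.

Lemma fn2_adj m n (X : 'M[C]_(m,n)) : fn2 (X^t*) = fn2 X.
Proof. by rewrite /fn2 adjK mxtrace_mulC. Qed.

Lemma fn2_iso m n k (Q : 'M[C]_(m,k)) (Y : 'M[C]_(k,n)) :
  Q^t* *m Q = 1%:M -> fn2 (Q *m Y) = fn2 Y.
Proof. by move=> HQ; rewrite /fn2 adjM mulmxA -(mulmxA _ _ Q) HQ mulmx1. Qed.

Lemma proj_idem n k (Q : 'M[C]_(n,k)) : Q^t* *m Q = 1%:M ->
  (1%:M - Q *m Q^t*)^t* *m (1%:M - Q *m Q^t*) = 1%:M - Q *m Q^t*.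
Proof.
move=> HQ; rewrite adjB adj1 adjM adjK mulmxBl mul1mx mulmxBr mulmx1.
rewrite mulmxA -(mulmxA Q) HQ mulmx1; by rewrite subrr subr0.
Qed.

Lemma fn2_pyth n k m (Q : 'M[C]_(n,k)) (X : 'M[C]_(n,m)) : Q^t* *m Q = 1%:M ->
  fn2 X = fn2 (Q^t* *m X) + fn2 ((1%:M - Q *m Q^t*) *m X).
Proof.
move=> HQ; rewrite /fn2 -ReD; congr Re.
have E : ((1%:M - Q *m Q^t*) *m X)^t* *m ((1%:M - Q *m Q^t*) *m X)
   = X^t* *m X - X^t* *m Q *m (Q^t* *m X).
  rewrite adjM -mulmxA (mulmxA _ _ X) proj_idem //.
  by rewrite mulmxBl mul1mx mulmxBr !mulmxA.
rewrite E adjM adjK -mxtraceD !mulmxA.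
by rewrite addrC subrK.
Qed.

Lemma herm_normal n (A : 'M[C]_n) : hermmx A -> A \is normalmx.
Proof. by rewrite /hermmx => HA; apply/normalmxP; rewrite HA. Qed.

Lemma unitary_adjL n (U : 'M[C]_n) : U \is unitarymx -> U^t* *m U = 1%:M.
Proof.
move=> HU; rewrite -invmx_unitary //; apply: mulVmx; exact: unitarymx_unit.
Qed.
Lemma unitary_adjR n (U : 'M[C]_n) : U \is unitarymx -> U *m U^t* = 1%:M.
Proof. by move/unitarymxP. Qed.

Lemma spec_decomp n (A : 'M[C]_n) : hermmx A ->
  A = (spectralmx A)^t* *m diag_mx (spectral_diag A) *m spectralmx A.
Proof.
move=> /herm_normal /orthomx_spectralP {1}->.
by rewrite invmx_unitary // spectral_unitarymx.
Qed.

Lemma char_poly_similar n (V U D : 'M[C]_n) : V *m U = 1%:M ->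
  char_poly (V *m D *m U) = char_poly D.
Proof.
move=> HVU; rewrite /char_poly /char_poly_mx.
set Vp := map_mx polyC V; set Up := map_mx polyC U.
have HVUp : Vp *m Up = 1%:M by rewrite -map_mxM HVU map_mx1.
have -> : 'X%:M - map_mx polyC (V *m D *m U) = Vp *m ('X%:M - map_mx polyC D) *m Up.
  rewrite !map_mxM mulmxBr mulmxBl -/Vp -/Up; congr (_ - _).
  by rewrite scalar_mxC -mulmxA HVUp mulmx1.
rewrite !det_mulmx mulrC mulrA -det_mulmx (mulmx1C HVUp) det1 mul1r //.
Qed.

Lemma spec_perm n (A : 'M[C]_n) (s : seq C) : hermmx A ->
  char_poly A = \prod_(x <- s) ('X - x%:P) ->
  perm_eq [seq spectral_diag A 0 i | i <- enum 'I_n] s.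
Proof.
move=> HA; rewrite {1}(spec_decomp HA) char_poly_similar; last first.
  by rewrite unitary_adjL // spectral_unitarymx.
rewrite char_poly_trig ?diag_mx_is_trig // => E; apply: prod_XsubC_eq.
rewrite -E big_map big_enum /=; apply: eq_bigr => i _.
by rewrite mxE eqxx mulr1n.
Qed.

Definition rs n m (W : 'M[C]_(n,m)) (i : 'I_n) : R :=
  \sum_l (Re (W i l) ^+ 2 + Im (W i l) ^+ 2).

Lemma rs_ge0 n m (W : 'M[C]_(n,m)) i : 0 <= rs W i.
Proof. by apply: sumr_ge0 => l _; rewrite addr_ge0 // sqr_ge0. Qed.

Lemma fn2_rs n m (W : 'M[C]_(n,m)) : fn2 W = \sum_i rs W i.
Proof. by rewrite fn2E exchange_big. Qed.

Lemma qf_diag n m (e : 'rV[C]_n) (W : 'M[C]_(n,m)) :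
  Re (\tr (W^t* *m diag_mx e *m W)) = \sum_i Re (e 0 i) * rs W i.
Proof.
rewrite /mxtrace Re_sum.
under eq_bigr => l _ do rewrite -mulmxA mxE Re_sum.
rewrite exchange_big; apply: eq_bigr => i _.
rewrite /rs mulr_sumr; apply: eq_bigr => l _.
rewrite mul_diag_mx !mxE.
case: (W i l) => a b; case: (e 0 i) => x y /=; ring.
Qed.

Lemma fn2_diag n m (e : 'rV[C]_n) (W : 'M[C]_(n,m)) :
  fn2 (diag_mx e *m W) = \sum_i (Re (e 0 i) ^+ 2 + Im (e 0 i) ^+ 2) * rs W i.
Proof.
rewrite fn2_rs; apply: eq_bigr => i _.
rewrite /rs mulr_sumr; apply: eq_bigr => l _.
rewrite mul_diag_mx !mxE.
case: (W i l) => a b; case: (e 0 i) => x y /=; ring.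
Qed.

Lemma qf_spec n m (A : 'M[C]_n) (Z : 'M[C]_(n,m)) : hermmx A ->
  Re (\tr (Z^t* *m A *m Z)) =
  \sum_i Re (spectral_diag A 0 i) * rs (spectralmx A *m Z) i.
Proof.
move=> HA; rewrite -qf_diag {1}(spec_decomp HA) adjM !mulmxA //.
Qed.

Lemma shift_bound n (A : 'M[C]_n) (c : C) (r : R) : hermmx A ->
  (forall i, Re (spectral_diag A 0 i - c) ^+ 2 + Im (spectral_diag A 0 i - c) ^+ 2 <= r ^+ 2) ->
  forall m (Z : 'M[C]_(n,m)), fn2 ((A - c%:M) *m Z) <= r ^+ 2 * fn2 Z.
Proof.
move=> HA Hd m Z.
have HU := spectral_unitarymx A.
set U := spectralmx A in HU *; set d := spectral_diag A in Hd *.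
have E : A - c%:M = U^t* *m diag_mx (d - const_mx c) *m U.
  rewrite {1}(spec_decomp HA) -/U -/d linearB /= diag_const_mx mulmxBr mulmxBl.
  by congr (_ - _); rewrite scalar_mxC -mulmxA unitary_adjL // mulmx1.
rewrite E -!mulmxA fn2_iso; last by rewrite adjK unitary_adjR.
rewrite fn2_diag -(fn2_iso Z (unitary_adjL HU)) fn2_rs mulr_sumr.
apply: ler_sum => i _; apply: ler_wpM2r; first exact: rs_ge0.
by have := Hd i; rewrite !mxE.
Qed.

Lemma horner_intertw n' m' (A : 'M[C]_n'.+1) (B : 'M[C]_m'.+1) (Z : 'M[C]_(n'.+1, m'.+1)) :
  A *m Z = Z *m B -> forall p, horner_mx A p *m Z = Z *m horner_mx B p.
Proof.
move=> HAB; elim/poly_ind => [|p c IH]; first by rewrite !rmorph0 mul0mx mulmx0.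
rewrite !rmorphD !rmorphM /= !horner_mx_X !horner_mx_C -!mulmxE.
rewrite mulmxDl mulmxDr -mulmxA HAB mulmxA IH -!mulmxA; congr (_ + _).
by rewrite scalar_mxC.
Qed.

Lemma ReMn (n : nat) : Re (n%:R : C) = n%:R.
Proof. by elim: n => // n IH; rewrite !mulrS ReD IH. Qed.

Lemma adj_delta m n (i : 'I_m) (j : 'I_n) : (delta_mx i j : 'M[C]_(m,n))^t* = delta_mx j i.
Proof.
apply/matrixP => a b; rewrite !mxE.
by case: (a == j); case: (b == i) => /=; rewrite ?conjC1 ?conjC0.
Qed.

Lemma rs_row n m (W : 'M[C]_(n,m)) i : fn2 (delta_mx (0 : 'I_1) i *m W) = rs W i.
Proof.
rewrite fn2_rs big_ord1 /rs; apply: eq_bigr => l _.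
by rewrite -rowE mxE.
Qed.

Lemma rs_zero n m (W : 'M[C]_(n,m)) i : (forall l, W i l = 0) -> rs W i = 0.
Proof. by move=> H; rewrite /rs big1 // => l _; rewrite H /= expr0n /= addr0. Qed.

Lemma perp_bound n' k' (H : 'M[C]_n'.+1) (Ps : 'M[C]_(n'.+1, k'.+1)) (M : 'M[C]_k'.+1) (a b : R) :
  hermmx H -> Ps^t* *m Ps = 1%:M -> H *m Ps = Ps *m M ->
  (forall i, Re (spectral_diag H 0 i) < a -> ~~ root (char_poly M) (spectral_diag H 0 i)) ->
  (#|[pred i | (a <= Re (spectral_diag H 0 i))%R]| <= k'.+1)%N ->
  (forall i, Re (spectral_diag H 0 i) < a -> Re (spectral_diag H 0 i) <= b) ->
  forall m (Y : 'M[C]_(n'.+1, m)), Ps^t* *m Y = 0 ->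
  Re (\tr (Y^t* *m H *m Y)) <= b * fn2 Y.
Proof.
move=> HH HPs HM Hroot Hcard Hb m Y HY.
have HU := spectral_unitarymx H.
set U := spectralmx H in HU *; set d := spectral_diag H in Hroot Hcard Hb *.
have HUH : U *m H = diag_mx d *m U.
  by rewrite {1}(spec_decomp HH) -/U -/d !mulmxA unitary_adjR // mul1mx.
set z := U *m Ps.
have Hz : diag_mx d *m z = z *m M by rewrite /z mulmxA -HUH -(mulmxA U H Ps) HM mulmxA.
have Hzz : z^t* *m z = 1%:M.
  by rewrite /z adjM -mulmxA (mulmxA (U^t*)) unitary_adjL // mul1mx.
have Hz0 : forall i l, Re (d 0 i) < a -> z i l = 0.
  move=> i l Hi; have := horner_intertw Hz (char_poly M).
  rewrite Cayley_Hamilton mulmx0 horner_mx_diag => /matrixP /(_ i l).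
  rewrite mul_diag_mx !mxE => /eqP; rewrite mulf_eq0 => /orP [Hr|/eqP //].
  by have := Hroot i Hi; rewrite /root Hr.
have Hrs1 : forall i, fn2 ((1%:M - z *m z^t*) *m delta_mx i (0 : 'I_1)) = 1 - rs z i.
  move=> i; have := fn2_pyth (delta_mx i (0 : 'I_1)) Hzz.
  have E1 : fn2 (z^t* *m delta_mx i (0 : 'I_1)) = rs z i.
    by rewrite -fn2_adj adjM adjK adj_delta rs_row.
  have E2 : fn2 (delta_mx i (0 : 'I_1) : 'M[C]_(n'.+1,1)) = 1.
    by rewrite /fn2 adj_delta mul_delta_mx /mxtrace big_ord1 mxE !eqxx.
  by rewrite E1 E2 => E; lra.
have Hle1 : forall i, rs z i <= 1.
  by move=> i; have := fn2_ge0 ((1%:M - z *m z^t*) *m delta_mx i (0 : 'I_1)); rewrite Hrs1 subr_ge0.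
have Hrs0 : forall i, Re (d 0 i) < a -> rs z i = 0.
  by move=> i Hi; apply: rs_zero => l; apply: Hz0.
have Hsum : \sum_i rs z i = k'.+1%:R.
  rewrite -fn2_rs /z fn2_iso; last exact: unitary_adjL.
  by rewrite /fn2 HPs mxtrace1 ReMn.
have Hsum2 : \sum_(i | (a <= Re (d 0 i))%R) (1 - rs z i) = 0.
  apply/eqP; rewrite eq_le; apply/andP; split; last first.
    by apply: sumr_ge0 => i _; rewrite subr_ge0.
  rewrite sumrB sumr_const.
  rewrite (bigID (fun i => (a <= Re (d 0 i))%R)) /= in Hsum.
  rewrite [X in _ + X = _]big1 ?addr0 in Hsum; last first.
    by move=> i; rewrite -ltNge => Hi; apply: Hrs0.
  rewrite Hsum subr_le0 ler_nat; exact: Hcard.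
have HT1 : forall i, (a <= Re (d 0 i))%R -> rs z i = 1.
  have Hnn : forall i, (a <= Re (d 0 i))%R -> 0 <= 1 - rs z i.
    by move=> i _; rewrite subr_ge0.
  move=> i Hi; have := psumr_eq0P Hnn Hsum2 Hi; lra.
have Hz3 : z^t* *m (U *m Y) = 0.
  by rewrite /z adjM -mulmxA (mulmxA (U^t*)) unitary_adjL // mul1mx HY.
have Hrow : forall i, (a <= Re (d 0 i))%R -> forall l, (U *m Y) i l = 0.
  move=> i Hi l.
  set e := delta_mx i (0:'I_1) : 'M[C]_(n'.+1,1).
  have He : (1%:M - z *m z^t*) *m e = 0 by apply: fn2_eq0; rewrite Hrs1 HT1 // subrr.
  have He2 : e^t* = e^t* *m (z *m z^t*).
    rewrite mulmxBl mul1mx in He; move/subr0_eq: He => Ee; rewrite {1}Ee.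
    by rewrite adjM (adjM z) adjK.
  have <- : (e^t* *m (U *m Y)) 0 l = (U *m Y) i l by rewrite adj_delta -rowE mxE.
  by rewrite He2 -!mulmxA Hz3 !mulmx0 mxE.
rewrite qf_spec // -/U -/d -(fn2_iso Y (unitary_adjL HU)) fn2_rs mulr_sumr.
apply: ler_sum => i _.
case: (leP a (Re (d 0 i))) => Hi.
  by rewrite rs_zero ?mulr0 // => l; apply: Hrow.
by apply: ler_wpM2r; [exact: rs_ge0 | exact: Hb].
Qed.

Lemma card_count (T : finType) (P : pred T) : #|P| = count P (enum T).
Proof. by rewrite enumT cardE /enum_mem size_filter. Qed.

Lemma qf_lower n (A : 'M[C]_n) (a : R) : hermmx A ->
  (forall i, a <= Re (spectral_diag A 0 i)) ->
  forall m (Z : 'M[C]_(n,m)), a * fn2 Z <= Re (\tr (Z^t* *m A *m Z)).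
Proof.
move=> HA Ha m Z; rewrite qf_spec //.
rewrite -(fn2_iso Z (unitary_adjL (spectral_unitarymx A))) fn2_rs mulr_sumr.
by apply: ler_sum => i _; apply: ler_wpM2r; [exact: rs_ge0 | exact: Ha].
Qed.

Lemma fn2_add_le m n (A B : 'M[C]_(m,n)) : fn2 (A + B) <= 2 * fn2 A + 2 * fn2 B.
Proof.
rewrite !fn2E !mulr_sumr -big_split /=; apply: ler_sum => j _.
rewrite !mulr_sumr -big_split /=; apply: ler_sum => i _.
rewrite mxE; case: (A i j) => a b; case: (B i j) => x y /=.
rewrite -subr_ge0.
have -> : 2 * (a ^+ 2 + b ^+ 2) + 2 * (x ^+ 2 + y ^+ 2) - ((a + x) ^+ 2 + (b + y) ^+ 2)
  = (a - x) ^+ 2 + (b - y) ^+ 2 by ring.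
by rewrite addr_ge0 ?sqr_ge0.
Qed.

Lemma perm_mem_nth n (A : 'M[C]_n) (s : seq R) : hermmx A ->
  char_poly A = \prod_(l <- s) ('X - ((l%:C)%C)%:P) ->
  forall i, exists2 m, (m < size s)%N & spectral_diag A 0 i = ((s`_m)%:C)%C.
Proof.
move=> HA Hc i.
have Hp : perm_eq [seq spectral_diag A 0 i | i <- enum 'I_n] [seq (l%:C)%C | l <- s].
  by apply: spec_perm => //; rewrite Hc big_map.
have : spectral_diag A 0 i \in [seq (l%:C)%C | l <- s].
  by rewrite -(perm_mem Hp); apply: map_f; rewrite mem_enum.
case/mapP => l Hl ->; exists (index l s); first by rewrite index_mem.
by rewrite nth_index.
Qed.

Lemma rs_delta n (i j : 'I_n) : rs (delta_mx i (0 : 'I_1) : 'M[C]_(n,1)) j = (j == i)%:R.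
Proof.
rewrite /rs big_ord1 !mxE eqxx andbT.
by case: (j == i) => /=; rewrite ?expr1n ?expr0n /= ?addr0.
Qed.

Lemma fn2_proj_le n k m (Q : 'M[C]_(n,k)) (X : 'M[C]_(n,m)) : Q^t* *m Q = 1%:M ->
  fn2 (Q^t* *m X) <= fn2 X /\ fn2 ((1%:M - Q *m Q^t*) *m X) <= fn2 X.
Proof.
move=> HQ; rewrite (fn2_pyth X HQ); split.
  by rewrite lerDl fn2_ge0.
by rewrite lerDr fn2_ge0.
Qed.

Lemma sinTheta_eq n k (P Ps : 'M[C]_(n,k)) : P^t* *m P = 1%:M -> Ps^t* *m Ps = 1%:M ->
  sinThetaF P Ps = Num.sqrt (k%:R - fn2 (P^t* *m Ps)).
Proof.
move=> HP HPs; rewrite /sinThetaF; congr Num.sqrt.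
set A := P^t* *m Ps; set G := A^t* *m A.
have HG : hermmx G by rewrite /hermmx /G adjM adjK.
have HV := spectral_unitarymx G.
set V := spectralmx G in HV; set g := spectral_diag G.
have Hg : forall i, 0 <= Re (g 0 i) <= 1.
  move=> i; set e := delta_mx i (0:'I_1) : 'M[C]_(k,1).
  have E : Re (\tr ((V^t* *m e)^t* *m G *m (V^t* *m e))) = Re (g 0 i).
    rewrite qf_spec // -/V -/g mulmxA unitary_adjR // mul1mx.
    rewrite (bigD1 i) //= big1 ?addr0; first by rewrite rs_delta eqxx mulr1.
    by move=> j Hj; rewrite rs_delta (negbTE Hj) mulr0.
  have E2 : Re (\tr ((V^t* *m e)^t* *m G *m (V^t* *m e))) = fn2 (A *m (V^t* *m e)).
    by rewrite /fn2 /G !adjM !mulmxA.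
  rewrite -E E2 fn2_ge0 /=.
  rewrite /A -mulmxA; apply: le_trans (proj1 (fn2_proj_le _ HP)) _.
  rewrite fn2_iso // fn2_iso; last by rewrite adjK unitary_adjR.
  by rewrite /fn2 adj_delta mul_delta_mx /mxtrace big_ord1 mxE !eqxx.
rewrite /canon_angle /sing_vals -/A -/G -/g.
have -> : \sum_(i < k) sin (acos (Num.sqrt (Re (g 0 i)))) ^+ 2 = \sum_(i < k) (1 - Re (g 0 i)).
  apply: eq_bigr => i _; have /andP [h0 h1] := Hg i.
  rewrite sin2cos2 acosK ?sqr_sqrtr //.
  rewrite in_itv /=; apply/andP; split.
    by apply: le_trans (sqrtr_ge0 _); rewrite lerN10.
  by rewrite -sqrtr1 ler_sqrt.
rewrite sumrB sumr_const card_ord -Re_sum -mxtrace_diag.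
suff -> : \tr (diag_mx g) = \tr G by [].
rewrite [X in _ = \tr X](spec_decomp HG) -/V -/g mxtrace_mulC mulmxA unitary_adjR // mul1mx.
reflexivity.
Qed.

End S.

Lemma adj0 (R : realType) m n : (0 : 'M[R[i]]_(m,n))^t* = 0.
Proof. by apply/matrixP => i j; rewrite !mxE conjC0. Qed.

Local Notation Re := (@complex.Re _).

Theorem theorem3p1 (R : realType) (n k : nat) (H : 'M[R[i]]_n) (lam : seq R)
    (Ps P : 'M[R[i]]_(n, k)) :
  hermmx H ->
  sorted_eigenvalues H lam ->
  (1 <= k)%N -> (k < n)%N ->
  lam`_(k.-1) - lam`_k > 0 ->
  Ps ^t* *m Ps = 1%:M ->
  (* R(Ps) is the invariant subspace of H associated with lambda_1..lambda_k *)
  (exists M : 'M[R[i]]_k, H *m Ps = Ps *m M /\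
      char_poly M = \prod_(l <- take k lam) ('X - ((l%:C)%C)%:P)) ->
  P ^t* *m P = 1%:M ->
  let eta := complex.Re (\tr (Ps ^t* *m H *m Ps) - \tr (P ^t* *m H *m P)) in
  let eps := Num.sqrt (eta / (lam`_(k.-1) - lam`_k)) in
  frobnorm (H *m P - P *m (P ^t* *m H *m P)) / (lam`_0 - lam`_(n.-1))
    <= sinThetaF P Ps <= eps.
Proof.
move=> HH [Hsz Hsort Hchar] Hk1 Hkn Hgap HPs HMex HP.
case: k Ps P HPs HMex HP Hk1 Hkn Hgap => // k' Ps P HPs [M [HM HcM]] HP _ Hkn Hgap.
case: n H HH Hsz Hchar Ps P HPs HM HP Hkn => // n' H HH Hsz Hchar Ps P HPs HM HP Hkn.
cbv zeta; rewrite [k'.+1.-1]/= [n'.+1.-1]/=.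
set eta := complex.Re _.
set eps := Num.sqrt _.
have Hle : forall i j, (i <= j)%N -> (j < n'.+1)%N -> lam`_j <= lam`_i.
  move=> i j Hij Hj.
  have Htr : transitive (fun a b : R => b <= a).
    by move=> x y z h1 h2; exact: le_trans h2 h1.
  have Hi : i \in [pred n | (n < size lam)%N] by rewrite inE Hsz (leq_ltn_trans Hij Hj).
  have Hj' : j \in [pred n | (n < size lam)%N] by rewrite inE Hsz.
  exact: (@sorted_leq_nth R (fun a b => b <= a) Htr (@lexx _ R) 0 lam Hsort i j Hi Hj' Hij).
have {}Hgap : 0 < lam`_k' - lam`_k'.+1 by exact: Hgap.
set d := spectral_diag H.
have Hd : forall i, exists2 m, (m < n'.+1)%N & d 0 i = ((lam`_m)%:C)%C.
  by move=> i; have [m] := perm_mem_nth HH Hchar i; rewrite Hsz => Hm E; exists m.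
have HMh : M = Ps^t* *m H *m Ps by rewrite -mulmxA HM mulmxA HPs mul1mx.
have HMherm : hermmx M by rewrite /hermmx HMh !adjM adjK HH mulmxA.
have Hszk : size (take k'.+1 lam) = k'.+1 by rewrite size_takel // Hsz ltnW.
have He : forall i, exists2 m, (m < k'.+1)%N & spectral_diag M 0 i = ((lam`_m)%:C)%C.
  move=> i; have [m] := perm_mem_nth HMherm HcM i; rewrite Hszk => Hm E; exists m => //.
  by rewrite E nth_take.
have HPsH : Ps^t* *m H = M *m Ps^t*.
  have := congr1 (fun X => X^t*) HM; rewrite /= !adjM HH.
  by move: HMherm; rewrite /hermmx => ->.
have Hcomm : H *m (Ps *m Ps^t*) = (Ps *m Ps^t*) *m H.
  by rewrite mulmxA HM -mulmxA -HPsH mulmxA.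
set Pp := P *m P^t*; set Pi := Ps *m Ps^t*.
set s2 := k'.+1%:R - fn2 (P^t* *m Ps).
have HfPs : fn2 Ps = k'.+1%:R by rewrite /fn2 HPs mxtrace1 ReMn.
have HfP : fn2 P = k'.+1%:R by rewrite /fn2 HP mxtrace1 ReMn.
have Hs2a : fn2 ((1%:M - Pp) *m Ps) = s2.
  have := fn2_pyth Ps HP; rewrite HfPs -/Pp /s2 => E; lra.
have Hs2b : fn2 ((1%:M - Pi) *m P) = s2.
  have := fn2_pyth P HPs; rewrite HfP -/Pi /s2.
  have -> : fn2 (Ps^t* *m P) = fn2 (P^t* *m Ps) by rewrite -fn2_adj adjM adjK.
  move=> E; lra.
have Hs2 : 0 <= s2 by rewrite -Hs2a fn2_ge0.
rewrite (sinTheta_eq HP HPs) -/s2.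
have Hk0 : lam`_k' <= lam`_0 by apply: Hle => //; apply: ltn_trans Hkn.
have Hkn' : lam`_n' <= lam`_k'.+1 by apply: Hle.
have HL : 0 < lam`_0 - lam`_n' by lra.
apply/andP; split.
  set c : R[i] := ((lam`_0 + lam`_n') / 2)%:C%C.
  set r := (lam`_0 - lam`_n') / 2.
  have Hr : forall m (Z : 'M[R[i]]_(n'.+1,m)), fn2 ((H - c%:M) *m Z) <= r^+2 * fn2 Z.
    apply: shift_bound => // i; have [m Hm ->] := Hd i.
    rewrite /c /r /=.
    have h1 := Hle 0%N m (leq0n _) Hm; have h2 : lam`_n' <= lam`_m by apply: Hle; rewrite -ltnS.
    rewrite subr0 expr0n /= addr0 -subr_ge0.
    have -> : ((lam`_0 - lam`_n') / 2) ^+ 2 - (lam`_m - (lam`_0 + lam`_n') / 2) ^+ 2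
      = (lam`_0 - lam`_m) * (lam`_m - lam`_n') by field.
    by apply: mulr_ge0; rewrite subr_ge0.
  have HPP : (1%:M - Pp) *m P = 0 by rewrite mulmxBl mul1mx /Pp -mulmxA HP mulmx1 subrr.
  set T1 := (1%:M - Pp) *m ((H - c%:M) *m ((1%:M - Pi) *m P)).
  set T2 := (1%:M - Pp) *m (Pi *m ((H - c%:M) *m P)).
  have Hres : H *m P - P *m (P^t* *m H *m P) = T1 + T2.
    have E1 : Pi *m ((H - c%:M) *m P) = (H - c%:M) *m (Pi *m P).
      rewrite mulmxA [RHS]mulmxA; congr (_ *m _); rewrite mulmxBr mulmxBl -/Pi in Hcomm *.
      by rewrite Hcomm scalar_mxC.
    rewrite /T1 /T2 E1 -mulmxDr -mulmxDr (mulmxBl 1%:M Pi P) mul1mx subrK.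
    rewrite (mulmxBl H c%:M P) mulmxBr -scalar_mxC (mulmxA (1%:M - Pp) P) HPP mul0mx subr0.
    by rewrite (mulmxBl 1%:M Pp) mul1mx /Pp !mulmxA.
  have HT1 : fn2 T1 <= r^+2 * s2.
    rewrite /T1; apply: le_trans (proj2 (fn2_proj_le _ HP)) _.
    by rewrite -Hs2b; apply: Hr.
  have Hadj1 : (H - c%:M)^t* = H - c%:M.
    rewrite adjB HH adj_scalar; congr (_ - _%:M); exact: conjc_real.
  have HadjP : (1%:M - Pp)^t* = 1%:M - Pp by rewrite adjB adj1 /Pp adjM adjK.
  have HT2 : fn2 T2 <= r^+2 * s2.
    rewrite -fn2_adj.
    have -> : T2^t* = P^t* *m ((H - c%:M) *m (Ps *m (Ps^t* *m (1%:M - Pp)))).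
      by rewrite /T2 !adjM adjK Hadj1 HadjP /Pi !mulmxA.
    apply: le_trans (proj1 (fn2_proj_le _ HP)) _.
    apply: le_trans (Hr _ _) _.
    by rewrite fn2_iso // -Hs2a -fn2_adj adjM HadjP adjK.
  have -> : frobnorm (H *m P - P *m (P^t* *m H *m P)) = Num.sqrt (fn2 (H *m P - P *m (P^t* *m H *m P))) by [].
  rewrite Hres ler_pdivrMr //.
  have Hf : fn2 (T1 + T2) <= s2 * (lam`_0 - lam`_n')^+2.
    apply: le_trans (fn2_add_le _ _) _.
    have -> : s2 * (lam`_0 - lam`_n')^+2 = 2 * (r^+2 * s2) + 2 * (r^+2 * s2) by rewrite /r; field.
    move: HT1 HT2; generalize (fn2 T1) (fn2 T2) (r^+2 * s2) => u v w h1 h2; lra.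
  rewrite -[X in _ <= _ * X](ger0_norm (ltW HL)) -sqrtr_sqr -sqrtrM // ler_sqrt //.
  by apply: mulr_ge0 => //; apply: sqr_ge0.
have Hkn1 : (k' < n'.+1)%N by apply: ltnW.
have Hroot : forall i, Re (d 0 i) < lam`_k' -> ~~ root (char_poly M) (d 0 i).
  move=> i Hi; rewrite HcM -(big_map (fun l => (l%:C)%C) predT (fun x => 'X - x%:P)) root_prod_XsubC.
  apply/negP => /mapP [l /(nthP 0) [j Hj Ej] El].
  rewrite Hszk in Hj; rewrite nth_take // in Ej.
  move: Hi; rewrite El -Ej /=.
  have := Hle j k' Hj Hkn1; lra.
have Hcard : (#|[pred i | (lam`_k' <= Re (d 0 i))%R]| <= k'.+1)%N.
  apply: (@leq_trans (count (fun x => lam`_k' <= Re x) [seq d 0 i | i <- enum 'I_n'.+1])).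
    by rewrite count_map card_count; apply: eq_leq; apply: eq_count => x.
  have Hp : perm_eq [seq d 0 i | i <- enum 'I_n'.+1] [seq (l%:C)%C | l <- lam].
    by apply: spec_perm => //; rewrite big_map.
  rewrite (permP Hp) count_map.
  rewrite -[X in count _ X](cat_take_drop k'.+1 lam) count_cat.
  have -> : count (preim (fun l => (l%:C)%C) (fun x => lam`_k' <= Re x)) (drop k'.+1 lam) = 0%N.
    apply/eqP; rewrite -leqn0 leqNgt -has_count; apply/hasPn => x /(nthP 0) [j Hj <-] /=.
    rewrite nth_drop -ltNge; rewrite size_drop Hsz in Hj.
    have Hj2 : (k'.+1 + j < n'.+1)%N by rewrite -ltn_subRL.
    have := Hle k'.+1 (k'.+1 + j) (leq_addr _ _) Hj2; lra.
  by rewrite addn0 -{2}Hszk; exact: count_size.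
have Hb : forall i, Re (d 0 i) < lam`_k' -> Re (d 0 i) <= lam`_k'.+1.
  move=> i; have [m Hm ->] := Hd i; rewrite /= => Hi.
  case: (leqP m k') => Hmk.
    by have := Hle m k' Hmk Hkn1; lra.
  exact: Hle.
set Y := (1%:M - Pi) *m P; set B := Ps^t* *m P.
have HPY : Ps^t* *m Y = 0.
  by rewrite /Y mulmxA mulmxBr mulmx1 /Pi mulmxA HPs mul1mx subrr mul0mx.
have HY : Re (\tr (Y^t* *m H *m Y)) <= lam`_k'.+1 * s2.
  by rewrite -Hs2b; apply: (perp_bound HH HPs HM Hroot Hcard Hb).
have HYPs : Y^t* *m Ps = 0.
  by have := congr1 (fun X => X^t*) HPY; rewrite /= adjM adjK adj0.
have HPdec : P = Ps *m B + Y.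
  by rewrite /Y /B (mulmxBl 1%:M Pi P) mul1mx /Pi !mulmxA addrC subrK.
have Hdec : P^t* *m H *m P = B^t* *m M *m B + Y^t* *m H *m Y.
  have E : (Ps *m B + Y)^t* *m H *m (Ps *m B + Y) =
     B^t* *m (Ps^t* *m H *m Ps) *m B + B^t* *m (Ps^t* *m H *m Y)
     + (Y^t* *m H *m Ps) *m B + Y^t* *m H *m Y.
    rewrite adjD adjM !mulmxDl !mulmxDr !mulmxA.
    by rewrite !addrA.
  rewrite {1 2}HPdec E -HMh.
  rewrite -(mulmxA (Y^t*) H Ps) HM (mulmxA (Y^t*) Ps M) HYPs !mul0mx.
  by rewrite HPsH -(mulmxA M) HPY !mulmx0 !addr0.
have Hlow : forall i, lam`_k' <= Re (spectral_diag M 0 i).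
  move=> i; have [m Hm ->] := He i; rewrite /=.
  by apply: Hle => //; rewrite -ltnS.
set X := (1%:M - Pp) *m Ps.
have HX : X^t* *m X = 1%:M - B *m B^t*.
  rewrite /X adjM -mulmxA (mulmxA ((1%:M - Pp)^t*)) proj_idem //.
  by rewrite mulmxBl mul1mx mulmxBr HPs /B adjM adjK /Pp !mulmxA.
have HB : lam`_k' * s2 <= Re (\tr M) - Re (\tr (B^t* *m M *m B)).
  have := qf_lower HMherm Hlow (X^t*).
  rewrite fn2_adj Hs2a adjK => Hq; apply: le_trans Hq _.
  have E : \tr (X *m M *m X^t*) = \tr M - \tr (B^t* *m M *m B).
    rewrite mxtrace_mulC mulmxA HX mulmxBl mul1mx raddfB /= -mulmxA mxtrace_mulC mulmxA.
    by congr (_ - _); rewrite mulmxA mxtrace_mulC mulmxA.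
  by rewrite E ReB.
have Heta : (lam`_k' - lam`_k'.+1) * s2 <= eta.
  rewrite /eta -HMh Hdec mxtraceD ReB ReD mulrBl.
  by rewrite opprD addrA; apply: lerB.
have Heta0 : 0 <= eta by apply: le_trans Heta; apply: mulr_ge0 => //; exact: ltW.
rewrite /eps ler_sqrt; last by apply: divr_ge0 => //; exact: ltW.
by rewrite ler_pdivlMr // mulrC.
Qed.
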